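(* Let $\mu \in \mathbb{N}$ and let $J_2 = \begin{bmatrix} 0 & 1 \\ 0 & 0 \end{bmatrix}$. Then $J_2^{(\mu)} = J_2 \oplus \cdots \oplus J_2$ ($\mu$ summands) acting on $\mathbb{C}^{2\mu}$ can be written as $MN - NM$ with $M, N \in \mathcal{B}(\mathbb{C}^{2\mu})$, $M^2 = 0 = N^2$, if and only if $\mu$ is even. *)

(* Defs.v *)
From HB Require Import structures.
From mathcomp Require Import all_boot all_order all_algebra.
From mathcomp Require Import complex.
From mathcomp Require Import Rstruct.
From Stdlib Require Import Reals.
Set Implicit Arguments. Unset Strict Implicit. Unset Printing Implicit Defensive.
Import GRing.Theory Num.Theory.
Local Open Scope ring_scope.

Definition CC : Type := complex Rdefinitions.R.

(* J_2^{(mu)} = J_2 ⊕ ... ⊕ J_2 (mu summands), J_2 = [[0,1],[0,0]], as a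
   2mu x 2mu matrix w.r.t. the standard basis e_0,...,e_{2mu-1}, the k-th
   summand acting on span(e_{2k}, e_{2k+1}): its only nonzero entries are
   (2k, 2k+1) = 1. *)
Definition J2mu (mu : nat) : 'M[CC]_(2 * mu) :=
  \matrix_(i, j) (if ~~ odd i && (j == i.+1 :> nat) then 1 else 0).

(* Main.v *)
Require Import Defs.
From HB Require Import structures.
From mathcomp Require Import all_boot all_order all_algebra.
From mathcomp Require Import complex Rstruct.
From mathcomp Require Import zify.
Set Implicit Arguments. Unset Strict Implicit. Unset Printing Implicit Defensive.
Import GRing.Theory Num.Theory.
Local Open Scope ring_scope.

Lemma parity_lemma (F : fieldType) n (a b X Y : 'M[F]_n) :
  a *m a = 0 -> b *m b = 0 -> a *m b = b *m a -> b *m Y = Y *m b ->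
  a *m Y + Y *m a - b *m X - X *m b = 1%:M -> ~~ odd n.
Proof.
move=> aa bb ab bY E.
set Vb := kermx b.
set C := a *m cokermx b.
set U := (Vb *m a + b)%MS.
have Vbb : Vb *m b = 0 by apply/sub_kermxP.
have bVb : (b <= Vb)%MS by apply/sub_kermxP.
have h1 := mxrank_mul_ker Vb C.
have h3 := mxrank_mul_ker U (cokermx b).
have bU : (b <= U)%MS by apply: addsmxSr.
have eqZU : \rank (Vb :&: kermx C)%MS = \rank U.
  apply/eqmx_rank/andP; split.
    set Z := (Vb :&: kermx C)%MS.
    have ZVb : (Z <= Vb)%MS by apply: capmxSl.
    have Zb : Z *m b = 0 by apply/sub_kermxP.
    have ZaI : (Z *m a <= b)%MS.
      rewrite submxE -mulmxA; apply/eqP/sub_kermxP; exact: capmxSr.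
    rewrite -[Z]mulmx1 -E !mulmxDr !mulmxN !mulmxA Zb mul0mx subr0.
    apply: addmx_sub; first apply: addmx_sub.
    - apply: submx_trans bU; apply: submx_trans (submxMr Y ZaI) _.
      by rewrite bY submxMl.
    - apply: submx_trans (addsmxSl _ _); apply: submxMr.
      by apply/sub_kermxP; rewrite -mulmxA -bY mulmxA Zb mul0mx.
    - by rewrite eqmx_opp; apply: submx_trans bU; apply: submxMl.
  rewrite addsmx_sub !sub_capmx bVb /=.
  have g1 : (Vb *m a <= Vb)%MS by apply/sub_kermxP; rewrite -mulmxA ab mulmxA Vbb mul0mx.
  have g2 : (Vb *m a <= kermx C)%MS.
    by apply/sub_kermxP; rewrite /C mulmxA -(mulmxA Vb) aa mulmx0 mul0mx.
  have g3 : (b <= kermx C)%MS by apply/sub_kermxP; rewrite /C mulmxA -ab -mulmxA mulmx_coker mulmx0.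
  by apply/andP; split; [apply/andP; split|]; assumption.
have h4 : \rank (U *m cokermx b) = \rank (Vb *m C).
  by rewrite /U addsmxMr mulmx_coker addsmx0 /C mulmxA.
have h5 : \rank (U :&: kermx (cokermx b))%MS = \rank b.
  apply/eqmx_rank/andP; split.
    apply: submx_trans (capmxSr _ _) _.
    by rewrite submxE mulmx_ker.
  by rewrite sub_capmx bU; apply/sub_kermxP; rewrite mulmx_coker.
have h6 : \rank Vb = (n - \rank b)%N by rewrite mxrank_ker.
have h7 : (\rank b <= n)%N by apply: rank_leq_row.
rewrite h4 h5 in h3; rewrite eqZU -h3 h6 in h1.
move: h1 h7; set s := \rank (Vb *m C); set r := \rank b; move=> h1 h7.
have -> : n = (2 * (s + r))%N by lia.
by rewrite oddM.
Qed.

Lemma sg_lt mu (i : 'I_(mu + mu)) :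
  ((if (i < mu)%N then 2 * i else 2 * (i - mu) + 1) < 2 * mu)%N.
Proof. have := ltn_ord i; case: (ltnP i mu) => h /=; lia. Qed.

Definition sg mu (i : 'I_(mu + mu)) : 'I_(2 * mu) := Ordinal (sg_lt i).

Lemma sg_inj mu : injective (@sg mu).
Proof.
move=> i j /(congr1 val) /= h; apply: val_inj => /=.
move: h; case: (ltnP i mu); case: (ltnP j mu); lia.
Qed.

Lemma sg_bij mu : bijective (@sg mu).
Proof. by apply: inj_card_bij; [exact: sg_inj | rewrite !card_ord; lia]. Qed.

Lemma sg_l mu (k : 'I_mu) : val (sg (lshift mu k)) = (2 * k)%N.
Proof. by rewrite /= ltn_ord. Qed.

Lemma sg_r mu (k : 'I_mu) : val (sg (rshift mu k)) = (2 * k + 1)%N.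
Proof. by rewrite /= ltnNge leq_addr /= addKn. Qed.

Section PM.
Variable R : ringType.
Variable mu : nat.

Definition pm (A : 'M[R]_(2 * mu)) : 'M[R]_(mu + mu) := \matrix_(i, j) A (sg i) (sg j).

Lemma pm_mul A B : pm (A *m B) = pm A *m pm B.
Proof.
apply/matrixP => i j; rewrite !mxE.
under [RHS]eq_bigr => k _ do rewrite !mxE.
by rewrite (reindex (@sg mu)) //; apply: onW_bij; apply: sg_bij.
Qed.

Lemma pm_sub A B : pm (A - B) = pm A - pm B.
Proof. by apply/matrixP => i j; rewrite !mxE. Qed.

Lemma pm0 : pm 0 = 0.
Proof. by apply/matrixP => i j; rewrite !mxE. Qed.

Lemma pm_inj : injective pm.
Proof.
move=> A B h; have [g sg1 sg2] := sg_bij mu.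
apply/matrixP => i j; have := congr1 (fun C : 'M[R]_(mu+mu) => C (g i) (g j)) h.
by rewrite /= !mxE !sg2.
Qed.

Lemma pm_surj (B : 'M[R]_(mu + mu)) : exists A, pm A = B.
Proof.
have [g sg1 sg2] := sg_bij mu.
exists (\matrix_(i, j) B (g i) (g j)); apply/matrixP => i j.
by rewrite !mxE !sg1.
Qed.
End PM.

Lemma split_cases m n (i : 'I_(m+n)) :
  (exists k, i = lshift n k) \/ (exists k, i = rshift m k).
Proof. by rewrite -(splitK i); case: (split i) => k; [left|right]; exists k. Qed.

Lemma pmJ mu : pm (J2mu mu) = block_mx 0 1%:M 0 0.
Proof.
apply/matrixP => i j; rewrite [LHS]mxE /J2mu [LHS]mxE.
have [[k ->]|[k ->]] := split_cases i; have [[l ->]|[l ->]] := split_cases j.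
- rewrite block_mxEul mxE sg_l sg_l oddM /=.
  by case: eqP => //; lia.
- rewrite block_mxEur mxE sg_l sg_r oddM /=.
  case: (k =P l) => [->|ne]; first by rewrite addn1 eqxx.
  case: eqP => // h; case: ne; apply: val_inj => /=; lia.
- by rewrite block_mxEdl mxE sg_r addn1 /= oddM.
- by rewrite block_mxEdr mxE sg_r addn1 /= oddM.
Qed.

Lemma rearr (V : zmodType) (p q r s : V) : p - q - (r - s) = p + s - r - q.
Proof. by rewrite opprB addrA (addrAC p) (addrAC (p + s)). Qed.

Lemma block_red (R : ringType) mu (M N : 'M[R]_(mu + mu)) :
  M *m M = 0 -> N *m N = 0 -> block_mx 0 1%:M 0 0 = M *m N - N *m M ->
  exists a b X Y : 'M[R]_mu, [/\ a *m a = 0, b *m b = 0, a *m b = b *m a,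
    b *m Y = Y *m b & a *m Y + Y *m a - b *m X - X *m b = 1%:M].
Proof.
set J := block_mx _ _ _ _ => MM NN EJ.
have MJ : M *m J + J *m M = 0.
  rewrite EJ mulmxBr mulmxBl !mulmxA MM mul0mx -(mulmxA N M M) MM mulmx0.
  by rewrite sub0r subr0 addNr.
have NJ : N *m J + J *m N = 0.
  rewrite EJ mulmxBr mulmxBl !mulmxA NN mul0mx -(mulmxA M N N) NN mulmx0.
  by rewrite sub0r subr0 addrN.
move: MM NN EJ MJ NJ.
rewrite -[M]submxK -[N]submxK /J.
move: (ulsubmx M) (ursubmx M) (dlsubmx M) (drsubmx M) => a X g d.
move: (ulsubmx N) (ursubmx N) (dlsubmx N) (drsubmx N) => b Y h e.
rewrite !mulmx_block !mulmx0 !mul0mx !mulmx1 !mul1mx !addr0 !add0r.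
rewrite !add_block_mx -!block_mx0.
move=> MM NN EJ /eq_block_mx[g0 ad _ _] /eq_block_mx[h0 be _ _].
rewrite add0r in g0; rewrite add0r in h0; subst g h.
move: MM NN EJ.
have -> : d = - a by apply/eqP; rewrite -addr_eq0 addrC ad.
have -> : e = - b by apply/eqP; rewrite -addr_eq0 addrC be.
rewrite !mulmx0 !mul0mx !addr0 !add0r !mulmxN !mulNmx.
rewrite opp_block_mx add_block_mx.
move=> /eq_block_mx[aa _ _ _] /eq_block_mx[bb bY _ _] /esym /eq_block_mx[ab E _ _].
exists a, b, X, Y; split => //.
- by apply/eqP; rewrite -subr_eq0 ab.
- by apply/eqP; rewrite -subr_eq0 bY.
- by rewrite -rearr E.
Qed.

Lemma block_con (R : ringType) k : exists M N : 'M[R]_((k + k) + (k + k)),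
  [/\ M *m M = 0, N *m N = 0 & block_mx 0 1%:M 0 0 = M *m N - N *m M].
Proof.
set a : 'M[R]_(k + k) := block_mx 0 1%:M 0 0.
set Y : 'M[R]_(k + k) := block_mx 0 0 1%:M 0.
have aa : a *m a = 0.
  by rewrite /a mulmx_block ?mulmx0 ?mul0mx ?mulmx1 ?addr0 block_mx0.
have aY : a *m Y + Y *m a = 1%:M.
  rewrite /a /Y !mulmx_block ?mulmx0 ?mul0mx ?mulmx1 ?mul1mx ?addr0 ?add0r.
  by rewrite add_block_mx ?addr0 ?add0r -scalar_mx_block.
clearbody a Y.
exists (block_mx a 0 0 (- a)), (block_mx 0 Y 0 0); split.
- rewrite mulmx_block ?mulmx0 ?mul0mx ?addr0 mulmxN mulNmx opprK aa ?addr0 block_mx0.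
- done.
- by rewrite mulmx_block ?mulmx0 ?mul0mx ?addr0 ?add0r; apply: block_mx0.
- rewrite !mulmx_block ?mulmx0 ?mul0mx ?addr0 ?add0r mulmxN.
  by rewrite opp_block_mx add_block_mx ?oppr0 ?addr0 ?add0r ?subr0 ?opprK aY.
Qed.

Unset Implicit Arguments.

Theorem proposition3p06 (mu : nat) :
  (exists M N : 'M[CC]_(2 * mu),
      M *m M = 0 /\ N *m N = 0 /\ J2mu mu = M *m N - N *m M)
  <-> ~~ odd mu.
Proof.
split.
- case=> M [N [MM [NN EJ]]].
  have := @block_red _ mu (pm M) (pm N).
  rewrite -!pm_mul MM NN pm0 -pmJ EJ pm_sub !pm_mul.
  case=> // a [b [X [Y [aa bb ab bY E]]]].
  exact: parity_lemma aa bb ab bY E.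
- move=> ev.
  have [k ek] : exists k, mu = (k + k)%N.
    exists mu./2; rewrite addnn; move: (odd_double_half mu).
    by rewrite (negbTE ev) add0n.
  subst mu.
  have [M' [N' [MM NN EJ]]] := @block_con CC k.
  have [M eM] := pm_surj M'; have [N eN] := pm_surj N'.
  exists M, N; split; [|split].
  + by apply: pm_inj; rewrite pm_mul eM MM pm0.
  + by apply: pm_inj; rewrite pm_mul eN NN pm0.
  + by apply: pm_inj; rewrite pmJ pm_sub !pm_mul eM eN.
Qed.
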